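(* For every integer $k\ge 3$, there exists a majority neighbor sum distinguishing $4$-edge-coloring $c$ of $K_{2k}$ with the following property: if $v_1,\dots,v_{2k}$ is the ordering of the vertices of $K_{2k}$ with $\sigma_c(v_i)<\sigma_c(v_j)$ for all $i<j$, then $v_k$ is incident to at most $k-2$ edges of color $2$, or $v_{k+1}$ is incident to at most $k-2$ edges of color $3$.
   Context: A $4$-edge-coloring of $G$ is any map $c:E(G)\to\{1,2,3,4\}$ (adjacent edges may share colors). It induces $\sigma_c(v)=\sum_{u\in N(v)}c(vu)$. The coloring is neighbor sum distinguishing if $\sigma_c(u)\ne\sigma_c(v)$ for every edge $uv$ (in a complete graph this means all values $\sigma_c(v)$ are distinct, so the ordering is well defined), and majority if every vertex $v$ is incident to at most $d(v)/2$ edges of each single color. *)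

(* Defs.v *)
From mathcomp Require Import all_boot.
Set Implicit Arguments. Unset Strict Implicit. Unset Printing Implicit Defensive.

(* Complete graph K_n on vertex set 'I_n.  An edge coloring is a symmetric
   function c : 'I_n -> 'I_n -> nat; only values c u v with u != v matter
   (they are the colors of the edges uv) and they must lie in {1,2,3,4}. *)

Definition is_4_edge_coloring n (c : 'I_n -> 'I_n -> nat) : Prop :=
  (forall u v : 'I_n, c u v = c v u) /\
  (forall u v : 'I_n, u != v -> 1 <= c u v <= 4).

Definition sigma n (c : 'I_n -> 'I_n -> nat) (v : 'I_n) : nat :=
  \sum_(u : 'I_n | u != v) c v u.

Definition deg_col n (c : 'I_n -> 'I_n -> nat) (v : 'I_n) (a : nat) : nat :=
  #|[set u : 'I_n | (u != v) && (c v u == a)]|.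

Definition nsd n (c : 'I_n -> 'I_n -> nat) : Prop :=
  forall u v : 'I_n, u != v -> sigma c u != sigma c v.

Definition majority n (c : 'I_n -> 'I_n -> nat) : Prop :=
  forall (v : 'I_n) (a : nat), 2 * deg_col c v a <= n.-1.

(* rank of v in the ordering by sigma: number of vertices with smaller sum;
   v_i (1-based) in the paper's ordering is the vertex of rank i-1 *)
Definition srank n (c : 'I_n -> 'I_n -> nat) (v : 'I_n) : nat :=
  #|[set u : 'I_n | sigma c u < sigma c v]|.

(* Main.v *)
Require Import Defs.
From mathcomp Require Import all_boot zify.
Set Implicit Arguments. Unset Strict Implicit. Unset Printing Implicit Defensive.

Lemma card_count n (P : nat -> bool) : #|[set u : 'I_n | P u]| = count P (iota 0 n).
Proof.
rewrite -val_enum_ord count_map cardsE cardE /enum_mem size_filter.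
by rewrite filter_predT.
Qed.

Lemma count_lt n v : v <= n -> count (fun u => u < v) (iota 0 n) = v.
Proof.
move=> h; rewrite -(subnKC h) iotaD count_cat add0n.
rewrite (@eq_in_count _ _ predT (iota 0 v)); last first.
  by move=> x; rewrite mem_iota /=; lia.
rewrite count_predT size_iota (@eq_in_count _ _ pred0); last first.
  by move=> x; rewrite mem_iota /=; lia.
by rewrite count_pred0 addn0.
Qed.

Definition Fs (f : nat -> nat) n w := \sum_(u < n | (u : nat) != w) f (w + u).

Lemma Fs_full f n w : w < n -> \sum_(u < n) f (w+u) = f (w+w) + Fs f n w.
Proof.
move=> hw; rewrite (bigD1 (Ordinal hw)) //=; congr (_ + _).
Qed.

Lemma shift f n w : \sum_(u < n) f (w.+1 + u) + f w = \sum_(u<n) f (w+u) + f (w+n).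
Proof.
have e1 : \sum_(u < n.+1) f (w+u) = f w + \sum_(u < n) f (w.+1 + u).
  by rewrite big_ord_recl addn0; congr (_ + _); apply: eq_bigr => i _; rewrite /= addnS addSn.
have e2 : \sum_(u < n.+1) f (w+u) = \sum_(u < n) f (w + u) + f (w + n).
  by rewrite big_ord_recr.
by rewrite addnC -e1 e2.
Qed.

Lemma Fs_rec f n w : w.+1 < n ->
  Fs f n w.+1 + f (w.+1 + w.+1) + f w = Fs f n w + f (w+w) + f (w+n).
Proof.
move=> hw.
have h1 := Fs_full f hw.
have h2 := Fs_full f (ltnW hw).
have h3 := shift f n w.
lia.
Qed.

Lemma Fs_mono f n :
  (forall w, w.+1 < n -> f w + f (w.+1 + w.+1) < f (w+n) + f (w+w)) ->
  forall a b, a < b -> b < n -> Fs f n a < Fs f n b.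
Proof.
move=> hs a b hab; elim: b hab => [//|b IH] hab hb.
have hr := Fs_rec f hb.
have hsb := hs b hb.
have hlt : Fs f n b < Fs f n b.+1 by lia.
case: (ltngtP a b) => [h|h|->].
- have := IH h (ltnW hb); lia.
- lia.
- done.
Qed.

Lemma count_inj_bound (P : pred nat) (h : nat -> nat) s m : uniq s ->
  (forall x, x \in s -> P x -> h x < m) ->
  {in [seq x <- s | P x] &, injective h} -> count P s <= m.
Proof.
move=> us hr hi.
rewrite -size_filter -(size_map h) -[m](size_iota 0).
apply: uniq_leq_size.
  by rewrite (map_inj_in_uniq hi) filter_uniq.
move=> y /mapP [x]; rewrite mem_filter => /andP [px xs] ->.
by rewrite mem_iota /= add0n hr.
Qed.

Definition e k j := if j + j %% 2 <= k - 2 then 2 else if j + j %% 2 <= k then 3 else 4.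
Definition g k s := if s %% 2 == 1 then (if s < 2*k-1 then 1 else if s == 2*k-1 then 3 else 2)
  else e k (s %/ 2).

Lemma g_even k q : g k (q + q) = e k q.
Proof.
rewrite /g; have -> : ((q+q) %% 2 == 1) = false by lia.
by have -> : (q+q) %/ 2 = q by lia.
Qed.

Lemma g_odd k q : 1 <= k -> g k (q + q).+1 = if q < k-1 then 1 else if q == k-1 then 3 else 2.
Proof.
move=> hk; rewrite /g; have -> : ((q+q).+1 %% 2 == 1) = true by lia.
have -> : ((q+q).+1 < 2*k-1) = (q < k-1) by lia.
by have -> : ((q+q).+1 == 2*k-1) = (q == k-1) by lia.
Qed.

Lemma parity w : exists q, w = q + q \/ w = (q+q).+1.
Proof. exists (w %/ 2); lia. Qed.

Lemma step k w : 4 <= k -> w.+1 < 2 * k ->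
  g k w + g k (w.+1 + w.+1) < g k (w + 2 * k) + g k (w + w).
Proof.
move=> hk hw; rewrite !g_even.
have [q [hq|hq]] := parity w; subst w.
- have -> : q + q + 2 * k = (q+k) + (q+k) by lia.
  rewrite !g_even /e.
  (repeat case: ifP); lia.
- have -> : (q + q).+1 + 2 * k = ((q+k) + (q+k)).+1 by lia.
  rewrite !g_odd; try lia.
  have -> : (q + k < k - 1) = false by lia.
  have -> : (q + k == k - 1) = false by lia.
  have -> : (q < k - 1) = true by lia.
  rewrite /e.
  (repeat case: ifP); lia.
Qed.

Ltac crunch := rewrite /g /e; repeat case: ifP; lia.

Lemma bnd k v a (h : nat -> nat) m : v < 2*k ->
  (forall x, x < 2*k -> x != v -> g k (v+x) == a -> h x < m) ->
  (forall x y, x < 2*k -> y < 2*k -> x != v -> g k (v+x) == a -> y != v -> g k (v+y) == a -> h x = h y -> x = y) ->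
  count (fun x => (x != v) && (g k (v+x) == a)) (iota 0 (2*k)) <= m.
Proof.
move=> hv hr hi; apply: (@count_inj_bound _ h).
- exact: iota_uniq.
- move=> x; rewrite mem_iota /= => hx /andP[h1 h2]; exact: hr.
- move=> x y; rewrite !mem_filter !mem_iota /= => /andP[/andP[h1 h2] hx] /andP[/andP[h3 h4] hy].
  exact: hi.
Qed.

Lemma maj3 k v : 4 <= k -> v < 2*k ->
  count (fun x => (x != v) && (g k (v+x) == 3)) (iota 0 (2*k)) <= 3.
Proof.
move=> hk hv.
apply: (@bnd _ _ _ (fun x => if (v+x) %% 2 == 1 then 0 else 1 + ((v+x) %/ 2) %% 2)) => //.
- move=> x hx hxv; crunch.
- move=> x y hx hy hxv hgx hyv hgy; move: hgx hgy; crunch.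
Qed.

Lemma maj_g k v a : 4 <= k -> v < 2*k ->
  count (fun x => (x != v) && (g k (v+x) == a)) (iota 0 (2*k)) <= k - 1.
Proof.
move=> hk hv.
have [ha|ha] : (a == 0) || (4 < a) \/ 0 < a <= 4 by lia.
  apply: (@bnd _ _ _ (fun x => 0)) => //.
  - move=> x hx hxv; move: ha; crunch.
  - move=> x y hx hy hxv hgx; move: ha hgx; crunch.
have [->|[->|[->|->]]] : a = 1 \/ a = 2 \/ a = 3 \/ a = 4 by lia.
- apply: (@bnd _ _ _ (fun x => (v+x) %/ 2)) => //.
  + move=> x hx hxv; crunch.
  + move=> x y hx hy hxv hgx hyv hgy; move: hgx hgy; crunch.
- apply: (@bnd _ _ _ (fun x => if (v+x) %% 2 == 1 then (v+x) %/ 2 - k else (v+x) %/ 2)) => //.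
  + move=> x hx hxv; crunch.
  + move=> x y hx hy hxv hgx hyv hgy; move: hgx hgy; crunch.
- have := maj3 hk hv; lia.
- apply: (@bnd _ _ _ (fun x => (v+x) %/ 2 - k)) => //.
  + move=> x hx hxv; crunch.
  + move=> x y hx hy hxv hgx hyv hgy; move: hgx hgy; crunch.
Qed.

Definition tab := [:: 1;1;1;3;2;2;3;4;3;4;1].
Definition G k s := if k == 3 then nth 0 tab s else g k s.
Definition col k (u v : 'I_(2*k)) : nat := G k (u + v).
Arguments col : clear implicits.

Lemma sig_eq k (v : 'I_(2*k)) : sigma (col k) v = Fs (G k) (2*k) v.
Proof. by []. Qed.

Lemma deg_eq k (v : 'I_(2*k)) a :
  deg_col (col k) v a = count (fun x => (x != (v : nat)) && (G k ((v : nat) + x) == a)) (iota 0 (2*k)).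
Proof. exact: card_count. Qed.

Lemma tab_maj m a : m < 6 ->
  2 * count (fun x => (x != m) && (nth 0 tab (m+x) == a)) (iota 0 6) <= 5.
Proof.
case: a => [|[|[|[|[|a]]]]]; move: m; do 6! (case => [_|]; first by vm_compute) => //.
Qed.

Lemma tab_step w : w.+1 < 6 ->
  nth 0 tab w + nth 0 tab (w.+1 + w.+1) < nth 0 tab (w + 6) + nth 0 tab (w + w).
Proof. by move: w; do 5! case => //. Qed.

Theorem mainTheorem20 (k : nat) (hk : 3 <= k) :
  exists c : 'I_(2 * k) -> 'I_(2 * k) -> nat,
    [/\ is_4_edge_coloring c, nsd c, majority c &
      forall vk vk1 : 'I_(2 * k),
        srank c vk = k.-1 -> srank c vk1 = k ->
        deg_col c vk 2 <= k - 2 \/ deg_col c vk1 3 <= k - 2].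
Proof.
have stepG : forall w, w.+1 < 2 * k -> G k w + G k (w.+1 + w.+1) < G k (w + 2 * k) + G k (w + w).
  move=> w hw; rewrite /G; case: eqP => [k3|k3].
    by subst k; exact: tab_step.
  apply: step => //; lia.
have mono := Fs_mono stepG.
have srk : forall v : 'I_(2*k), srank (col k) v = v.
  move=> v; rewrite /srank.
  have -> : [set u : 'I_(2*k) | sigma (col k) u < sigma (col k) v] = [set u : 'I_(2*k) | (u : nat) < v].
    apply/setP => u; rewrite !inE !sig_eq.
    case: (ltngtP u v) => h.
    - have := mono _ _ h (ltn_ord v); lia.
    - have := mono _ _ h (ltn_ord u); lia.
    - by rewrite h ltnn.
  by rewrite (@card_count _ (fun x : nat => x < v)) count_lt // ltnW.
exists (col k); split.
- split; first by move=> u v; rewrite /col addnC.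
  move=> u v _; rewrite /col /G.
  case: eqP => [k3|k3].
    subst k; have hs : u + v < 11 by have := ltn_ord u; have := ltn_ord v; lia.
    move: (nat_of_ord u + nat_of_ord v) hs => s.
    by do 11! (case: s => [//|s]).
  rewrite /g /e; repeat case: ifP; lia.
- move=> u v huv; rewrite !sig_eq.
  case: (ltngtP u v) => h.
  + have := mono _ _ h (ltn_ord v); lia.
  + have := mono _ _ h (ltn_ord u); lia.
  + by move/eqP: huv; case; apply: val_inj.
- move=> v a; rewrite deg_eq.
  case: (k =P 3) => [k3|k3].
    subst k; rewrite /G /=; exact: tab_maj.
  rewrite (@eq_count _ _ (fun x => (x != (v:nat)) && (g k ((v:nat) + x) == a))); last first.
    by move=> x; rewrite /G (introF eqP k3).
  have := @maj_g k v a ltac:(lia) (ltn_ord v); lia.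
- move=> vk vk1; rewrite !srk => h1 h2; rewrite !deg_eq h1 h2.
  case: (k =P 3) => [k3|k3].
    by subst k; left; vm_compute.
  case: (k =P 4) => [k4|k4].
    by subst k; left; vm_compute.
  right; rewrite (@eq_count _ _ (fun x => (x != k) && (g k (k + x) == 3))); last first.
    by move=> x; rewrite /G (introF eqP k3).
  have := @maj3 k k ltac:(lia) ltac:(lia); lia.
Qed.
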